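(* There exist a polynomial $p$ and a constant $c>0$ such that for every integer $k\geq 1$ there exist an approval election $E=(N,C,(A_v)_{v\in N},k)$ with $|N|\le p(k)$ voters, a committee $W_0\subseteq C$ with $|W_0|=k$, and a valid sequence of swaps $(a_1,b_1),\dots,(a_s,b_s)$ starting from $W_0$ with $s\ge c\,k^2$ (i.e., of length $\Omega(k^2)$) such that every swap in the sequence increases the PAV score by at least $\frac{n}{k^2}$, where $n=|N|$; that is, $\Delta(W_{t-1},a_t,b_t)\ge \frac{n}{k^2}$ for all $t\in[s]$.
   Context: An approval election is a tuple $E=(N,C,(A_v)_{v\in N},k)$ where $N=[n]$ is a set of voters, $C$ is a finite set of candidates, $A_v\subseteq C$ is the approval ballot of voter $v$, and $k\in[|C|]$ is the target committee size. A committee is a subset of $C$. The PAV score of a committee $W$ is $\textsc{pavsc}(W)=\sum_{v\in N}\sum_{j=1}^{|A_v\cap W|}\frac{1}{j}$. For $a\in W$, $b\notin W$, let $\Delta(W,a,b)=\textsc{pavsc}((W\setminus\{a\})\cup\{b\})-\textsc{pavsc}(W)$. A sequence of swaps $(a_1,b_1),\dots,(a_s,b_s)$ is valid starting from $W_0$ if, setting $W_t=(W_{t-1}\cup\{b_t\})\setminus\{a_t\}$, we have $a_t\in W_{t-1}$ and $b_t\notin W_{t-1}$ for every $t\in[s]$. *)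

(* Defs.v *)
From mathcomp Require Import all_boot all_order all_algebra.
Set Implicit Arguments. Unset Strict Implicit. Unset Printing Implicit Defensive.
Import Order.TTheory GRing.Theory Num.Theory.
Local Open Scope ring_scope.

Definition pavsc (n m : nat) (A : 'I_n -> {set 'I_m}) (W : {set 'I_m}) : rat :=
  \sum_(v < n) \sum_(1 <= j < #|A v :&: W|.+1) (j%:R)^-1.

Definition swap (m : nat) (W : {set 'I_m}) (a b : 'I_m) : {set 'I_m} :=
  (W :|: [set b]) :\ a.

Definition Delta (n m : nat) (A : 'I_n -> {set 'I_m}) (W : {set 'I_m}) (a b : 'I_m) : rat :=
  pavsc A ((W :\ a) :|: [set b]) - pavsc A W.

Fixpoint valid_swaps (m : nat) (W : {set 'I_m}) (s : seq ('I_m * 'I_m)) : bool :=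
  match s with
  | [::] => true
  | (a, b) :: s' => [&& a \in W, b \notin W & valid_swaps (swap W a b) s']
  end.

Fixpoint all_swaps_gain (n m : nat) (A : 'I_n -> {set 'I_m}) (thr : rat)
    (W : {set 'I_m}) (s : seq ('I_m * 'I_m)) : bool :=
  match s with
  | [::] => true
  | (a, b) :: s' => (thr <= Delta A W a b) && all_swaps_gain A thr (swap W a b) s'
  end.

(* Main.v *)
Require Import Defs.
From mathcomp Require Import all_boot all_order all_algebra.
From mathcomp Require Import zify ring lra.
Set Implicit Arguments. Unset Strict Implicit. Unset Printing Implicit Defensive.
Import Order.TTheory GRing.Theory Num.Theory.
Local Open Scope ring_scope.

Definition wt (n m : nat) (A : 'I_n -> {set 'I_m}) (x : 'I_m) : rat :=
  \sum_(v < n) ((x \in A v)%:R : rat).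

Lemma harm01 (c : nat) : (c <= 1)%N ->
  \sum_(1 <= j < c.+1) ((j%:R)^-1 : rat) = c%:R.
Proof.
case: c => [|[|//]] _; first by rewrite big_geq.
by rewrite big_nat1 invr1.
Qed.

Lemma pav_lin n m (A : 'I_n -> {set 'I_m}) W :
  (forall v, #|A v| <= 1)%N -> pavsc A W = \sum_(x in W) wt A x.
Proof.
move=> H1; rewrite /pavsc /wt.
rewrite (exchange_big_dep xpredT) //=.
apply: eq_bigr => v _.
rewrite harm01; last by apply: leq_trans (H1 v); apply: subset_leq_card; apply: subsetIl.
rewrite -sum1_card natr_sum.
rewrite [RHS](bigID (fun x => x \in A v)) /=.
rewrite [X in _ = _ + X]big1 ?addr0; last by move=> x /andP[_ /negbTE ->].
apply: eq_big => [x|x]; first by rewrite !inE andbT andbC.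
by rewrite inE => /andP[-> _].
Qed.

Lemma Delta_lin n m (A : 'I_n -> {set 'I_m}) (W : {set 'I_m}) (a b : 'I_m) :
  (forall v, #|A v| <= 1)%N -> a \in W -> b \notin W ->
  Delta A W a b = wt A b - wt A a.
Proof.
move=> H1 aW bW; rewrite /Delta !pav_lin //.
have bS : b \in (W :\ a) :|: [set b] by rewrite !inE eqxx orbT.
rewrite (bigD1 b bS) (bigD1 a aW) /=.
have -> : \sum_(i in (W :\ a) :|: [set b] | i != b) wt A i =
          \sum_(i in W | i != a) wt A i.
  apply: eq_bigl => x; rewrite !inE.
  case: (eqVneq x b) => [->|]; first by rewrite (negbTE bW) andbF.
  by move=> _; rewrite orbF andbT andbC.
set S := (X in wt A b + X - _); set S2 := (X in _ - (wt A a + X)); have -> : S2 = S by [].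
lra.
Qed.

Lemma count_int (N lo hi : nat) : (lo <= hi <= N)%N ->
  \sum_(i < N) ((lo <= i < hi)%N : nat) = (hi - lo)%N.
Proof.
move=> /andP[h1 h2].
rewrite -(big_mkord xpredT (fun i => ((lo <= i < hi)%N : nat))).
rewrite (big_cat_nat (leq0n lo) (leq_trans h1 h2)) /=.
rewrite (big_cat_nat h1 h2) /=.
have e1 : \sum_(0 <= i < lo) ((lo <= i < hi)%N : nat) = 0%N.
  by rewrite big_nat_cond big1 // => i /andP[/andP[_ Hi] _]; rewrite leqNgt Hi.
have e3 : \sum_(hi <= i < N) ((lo <= i < hi)%N : nat) = 0%N.
  by rewrite big_nat_cond big1 // => i /andP[/andP[Hi _] _]; rewrite andbC ltnNge Hi.
have e2 : \sum_(lo <= i < hi) ((lo <= i < hi)%N : nat) = (hi - lo)%N.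
  rewrite (eq_big_nat _ _ (F2 := fun _ => 1%N)); last by move=> i ->.
  by rewrite sum_nat_const_nat muln1.
rewrite e1 e2 e3 /=; lia.
Qed.

Lemma card_int (N lo hi : nat) : (lo <= hi <= N)%N ->
  #|[set i : 'I_N | (lo <= i < hi)%N]| = (hi - lo)%N.
Proof.
move=> H; rewrite -(count_int H) -sum1_card big_mkcond /=.
by apply: eq_bigr => i _; rewrite inE; case: ifP.
Qed.

Definition Aw (M n : nat) (v : 'I_n) : {set 'I_M} :=
  [set x : 'I_M | ('C(x, 2) <= v < 'C(x.+1, 2))%N].
Arguments Aw : clear implicits.

Lemma Aw_le1 M n v : (#|Aw M n v| <= 1)%N.
Proof.
apply/card_le1_eqP => x y; rewrite !inE => /andP[h1 h2] /andP[h3 h4].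
apply/val_inj/eqP; rewrite eqn_leq; apply/andP; split; rewrite leqNgt; apply/negP => lt.
  have := @leq_bin2l x.+1 y 2 lt; lia.
have := @leq_bin2l y.+1 x 2 lt; lia.
Qed.

Lemma wt_Aw M (x : 'I_M) : wt (Aw M 'C(M, 2)) x = (x : nat)%:R.
Proof.
rewrite /wt.
have -> : \sum_(v < 'C(M, 2)) (((x \in Aw M 'C(M, 2) v) : nat)%:R : rat) =
   ((\sum_(v < 'C(M, 2)) (('C(x, 2) <= v < 'C(x.+1, 2))%N : nat)) %:R).
  by rewrite natr_sum; apply: eq_bigr => v _; rewrite inE.
rewrite count_int; first by rewrite binS bin1 addKn.
by rewrite leq_bin2l //= leq_bin2l.
Qed.

Definition Cset (M k r j : nat) : {set 'I_M} :=
  [set x : 'I_M | (r <= x < r + j)%N || (r + j < x <= r + k)%N].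
Arguments Cset : clear implicits.

Fixpoint rs (M' r j : nat) : seq ('I_M'.+1 * 'I_M'.+1) :=
  match j with
  | 0 => [::]
  | j'.+1 => (inord (r + j'), inord (r + j'.+1)) :: rs M' r j'
  end.

Fixpoint fs (M' k r t : nat) : seq ('I_M'.+1 * 'I_M'.+1) :=
  match t with
  | 0 => [::]
  | t'.+1 => rs M' r k ++ fs M' k r.+1 t'
  end.

Lemma size_fs M' k r t : size (fs M' k r t) = (t * k)%N.
Proof.
elim: t r => [|t IH] r //=.
rewrite size_cat IH.
have -> : forall j, size (rs M' r j) = j by elim=> [|j IHj] //=; rewrite IHj.
by rewrite mulSn.
Qed.

Definition PP n M (A : 'I_n -> {set 'I_M}) thr W s :=
  valid_swaps W s && all_swaps_gain A thr W s.

Lemma round M' k r (thr : rat) t : (r + k <= M')%N -> thr <= 1 ->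
  forall j, (j <= k)%N ->
  PP (Aw M'.+1 'C(M'.+1, 2)) thr (Cset M'.+1 k r j) (rs M' r j ++ t) =
  PP (Aw M'.+1 'C(M'.+1, 2)) thr (Cset M'.+1 k r 0) t.
Proof.
move=> hM hthr; elim=> [|j IH] hj //=.
rewrite /PP /= -!andbA.
set a : 'I_M'.+1 := inord (r + j); set b : 'I_M'.+1 := inord (r + j.+1).
have va : (a : nat) = (r + j)%N by rewrite inordK //; lia.
have vb : (b : nat) = (r + j.+1)%N by rewrite inordK //; lia.
have aC : a \in Cset M'.+1 k r j.+1 by rewrite inE va; lia.
have bC : b \notin Cset M'.+1 k r j.+1 by rewrite inE vb; lia.
have -> : swap (Cset M'.+1 k r j.+1) a b = Cset M'.+1 k r j.
  apply/setP => x; rewrite !inE -!val_eqE /= va vb.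
  apply/idP/idP; lia.
rewrite aC bC /= Delta_lin //; last exact: Aw_le1.
rewrite (wt_Aw a) (wt_Aw b) va vb.
have -> : thr <= (r + j.+1)%:R - (r + j)%:R.
  by rewrite addnS -natr1; lra.
by have := IH (ltnW hj); rewrite /PP /= => <-.
Qed.

Lemma full M' k (thr : rat) : thr <= 1 ->
  forall t r, (r + t + k <= M'.+1)%N ->
  PP (Aw M'.+1 'C(M'.+1, 2)) thr (Cset M'.+1 k r k) (fs M' k r t).
Proof.
move=> hthr; elim=> [|t IH] r h; first by [].
rewrite /= round //; last lia.
have -> : Cset M'.+1 k r 0 = Cset M'.+1 k r.+1 k.
  apply/setP => x; rewrite !inE; apply/idP/idP; lia.
apply: IH; lia.
Qed.

Theorem theorem2 :
  exists (p : {poly rat}) (c : rat), 0 < c /\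
    forall k : nat, (1 <= k)%N ->
      exists (n m : nat) (A : 'I_n -> {set 'I_m}) (W0 : {set 'I_m})
             (s : seq ('I_m * 'I_m)),
        (0 < n)%N /\ (k <= m)%N /\ n%:R <= p.[k%:R] /\
        #|W0| = k /\
        valid_swaps W0 s /\
        c * (k%:R) ^+ 2 <= (size s)%:R /\
        all_swaps_gain A (n%:R / (k%:R) ^+ 2) W0 s.
Proof.
exists 'X^2, (4%:R)^-1; split => // k hk.
set q := (k %/ 4)%N.
have hq : k = (q * 4 + k %% 4)%N := divn_eq k 4.
have hr : (k %% 4 < 4)%N by rewrite ltn_mod.
move: hq hr; set t := (k %% 4)%N => hq hr.
clearbody q t.
set M' := (k + q)%N.
have hn : ('C(M'.+1, 2) <= k * k)%N.
  rewrite bin2 /=.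
  suff : (M'.+1 * M' <= 2 * (k * k))%N.
    move=> H; rewrite -(leq_pmul2l (isT : (0 < 2)%N)); apply: leq_trans H.
    by rewrite -[X in (_ <= X)%N](odd_double_half (M'.+1 * M')) -mul2n leq_addl.
  rewrite /M'; move: hk hr; rewrite hq; clear; case: q => [|q] hk hr; nia.
exists 'C(M'.+1, 2), M'.+1, (Aw M'.+1 'C(M'.+1, 2)), (Cset M'.+1 k 0 k),
  (fs M' k 0 q.+1).
have kpos : (0 < k%:R :> rat) by rewrite ltr0n.
have hthr : 'C(M'.+1, 2)%:R / k%:R ^+ 2 <= 1 :> rat.
  rewrite ler_pdivrMr ?exprn_gt0 // mul1r -natrX ler_nat; lia.
have := @full M' k _ hthr q.+1 0 ltac:(rewrite /M'; lia).
rewrite /PP => /andP[h1 h2].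
split; first by rewrite bin_gt0 /M'; lia.
split; first by rewrite /M'; lia.
split; first by rewrite hornerXn -natrX ler_nat; lia.
split.
  have -> : Cset M'.+1 k 0 k = [set i : 'I_M'.+1 | (0 <= i < k)%N].
    by apply/setP => x; rewrite !inE; apply/idP/idP; lia.
  by rewrite card_int ?subn0 //; rewrite /M'; lia.
split => //; split => //.
rewrite size_fs -natrX.
have : (k ^ 2 <= 4 * (q.+1 * k))%N by nia.
rewrite -(ler_nat rat) natrM => H; lra.
Qed.
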